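(* Let $m\ge2$ and $t\ge1$ be integers, and let $f$ be the two-digit base-$m$ Kaprekar map on $X=\{0,\dots,m^2-1\}$. There exists $x\in X$ with $K(x)\neq\{0\}$ and $T(x)=t$ if and only if there exists an integer $d>1$ with $d\mid m+1$ such that $t$ is the least positive integer satisfying $d\mid 2^t+1$ or $d\mid 2^t-1$.
   Context: For an integer $m\ge2$, $X=\{0,1,\dots,m^2-1\}$, each element written with exactly two base-$m$ digits (leading zeros allowed); $f(x)=D(x)-A(x)$ where $D(x)$ (resp. $A(x)$) has the digits of $x$ in nonincreasing (resp. nondecreasing) order. The step $S(x)$ is the least $s\ge0$ such that $f^{s+t}(x)=f^s(x)$ for some $t\ge1$; the minimal period $T(x)$ is the least $t\ge1$ with $f^{S(x)+t}(x)=f^{S(x)}(x)$; the fixed set of $x$ is $K(x)=\{f^{S(x)+i}(x):0\le i<T(x)\}$. *)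

(* Defs.v *)
From mathcomp Require Import all_boot.
From mathcomp Require Import boolp.
Set Implicit Arguments. Unset Strict Implicit. Unset Printing Implicit Defensive.

(* Two-digit base-m Kaprekar map: x = hi*m + lo with hi = x %/ m, lo = x %% m
   (for x < m^2 these are the two base-m digits, leading zero allowed).
   D(x) = digits in nonincreasing order, A(x) = digits in nondecreasing order. *)
Definition kdesc (m x : nat) : nat := maxn (x %/ m) (x %% m) * m + minn (x %/ m) (x %% m).
Definition kasc  (m x : nat) : nat := minn (x %/ m) (x %% m) * m + maxn (x %/ m) (x %% m).
Definition kap (m x : nat) : nat := kdesc m x - kasc m x.

Definition is_pre (m x s : nat) : bool :=
  `[< exists t, 0 < t /\ iter (s + t) (kap m) x = iter s (kap m) x >].

(* Step S(x): least s >= 0 with is_pre (0 if none exists; it always exists on X). *)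
Definition kstep (m x : nat) : nat :=
  match pselect (exists s, is_pre m x s) with
  | left h => ex_minn h
  | right _ => 0
  end.

Definition is_per (m x t : nat) : bool :=
  (0 < t) && (iter (kstep m x + t) (kap m) x == iter (kstep m x) (kap m) x).

Definition kperiod (m x : nat) : nat :=
  match pselect (exists t, is_per m x t) with
  | left h => ex_minn h
  | right _ => 0
  end.

(* Fixed set K(x) = { f^(S(x)+i)(x) : 0 <= i < T(x) }, as a list (compared as a set via =i). *)
Definition kfixed (m x : nat) : seq nat :=
  [seq iter (kstep m x + i) (kap m) x | i <- iota 0 (kperiod m x)].

(* Main.v *)
Require Import Defs.
From mathcomp Require Import all_boot all_algebra zify ring boolp.
Import GRing.Theory.

Definition g (m k : nat) : nat :=
  if k == 0 then 0 else if 2 * k <= m + 1 then m + 1 - 2 * k else 2 * k - (m + 1).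

Lemma kapE m w : kap m w = (maxn (w %/ m) (w %% m) - minn (w %/ m) (w %% m)) * (m - 1).
Proof.
rewrite /kap /kdesc /kasc; set a := w %/ m; set b := w %% m.
case: (leqP a b) => h; nia.
Qed.

Lemma kap_g m k : 2 <= m -> k < m -> kap m (k * (m - 1)) = g m k * (m - 1).
Proof.
move=> hm hk; rewrite kapE /g.
case: eqP => [->|k0]; first by rewrite mul0n div0n mod0n.
have e : k * (m - 1) = (k - 1) * m + (m - k) by nia.
rewrite e divnMDl ?modnMDl ?(divn_small (_ : m - k < m)) ?modn_small; try lia.
rewrite addn0. case: ifP => h; f_equal; lia.
Qed.

Lemma g_lt m k : 2 <= m -> k < m -> g m k < m.
Proof. move=> hm hk; rewrite /g; case: eqP => h0; [lia|case: ifP => _; lia]. Qed.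

Lemma iter_g_lt m k j : 2 <= m -> k < m -> iter j (g m) k < m.
Proof. move=> hm hk; elim: j => //= j IH; exact: g_lt. Qed.

Lemma iter_kap m k j : 2 <= m -> k < m ->
  iter j (kap m) (k * (m - 1)) = iter j (g m) k * (m - 1).
Proof.
move=> hm hk; elim: j => //= j ->; apply: kap_g => //; exact: iter_g_lt.
Qed.

Lemma g_sym m k : 0 < k < m + 1 -> g m (m + 1 - k) = g m k.
Proof.
move=> hk; rewrite /g.
have -> : (m + 1 - k == 0) = false by lia.
have -> : (k == 0) = false by lia.
do 2 case: ifP => ?; lia.
Qed.

Lemma kap_lt m w : 2 <= m -> w < m ^ 2 -> exists y, y < m /\ kap m w = y * (m - 1).
Proof.
move=> hm hw; rewrite kapE; exists (maxn (w %/ m) (w %% m) - minn (w %/ m) (w %% m)); split => //.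
have h1 : w %/ m < m by rewrite ltn_divLR; [rewrite expnS expn1 in hw; lia | lia].
have h2 : w %% m < m by rewrite ltn_mod; lia.
move: h1 h2; clear hw; generalize (w %/ m) (w %% m) => a b; case: (leqP a b); lia.
Qed.

Lemma kap_lt2 m w : 2 <= m -> w < m ^ 2 -> kap m w < m ^ 2.
Proof. move=> hm hw; have [y [hy ->]] := kap_lt m w hm hw; rewrite expnS expn1; nia. Qed.

Lemma iter_lt2 m x j : 2 <= m -> x < m ^ 2 -> iter j (kap m) x < m ^ 2.
Proof. move=> hm hx; elim: j => //= j IH; exact: kap_lt2. Qed.
Section ZN.
Local Open Scope ring_scope.

Lemma gZ m k : (2 <= m)%N -> exists e : nat, ((g m k)%:R : 'Z_(m+1)) = (-1) ^+ e * (2 * k)%:R.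
Proof.
move=> hm; have hz : ((m+1)%:R : 'Z_(m+1)) = 0 by apply: pchar_Zp; lia.
rewrite /g; case: eqP => [->|k0]; first by exists 0%N; rewrite muln0 mulr0.
case: ifP => h.
  exists 1%N; rewrite natrB // hz. by rewrite sub0r expr1 mulN1r.
exists 0%N; rewrite natrB; last lia. by rewrite hz subr0 mul1r.
Qed.

Lemma iter_gZ m k j : (2 <= m)%N ->
  exists e : nat, ((iter j (g m) k)%:R : 'Z_(m+1)) = (-1) ^+ e * (2 ^ j * k)%:R.
Proof.
move=> hm; elim: j => [|j [e IH]]; first by exists 0%N; rewrite /= expn0 mul1n mul1r.
have [e' H] := gZ m (iter j (g m) k) hm.
exists (e' + e)%N; rewrite /= H natrM IH expnS -mulnA natrM exprD natrM.
ring.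
Qed.

Lemma sign_comb (R : comRingType) (u y X : R) e1 e2 :
  u = (-1) ^+ e1 * X -> y = (-1) ^+ e2 * X -> u = (-1) ^+ (e1 + e2) * y.
Proof.
move=> -> ->; by rewrite exprD -mulrA signrMK.
Qed.

Lemma Z0 m x : (2 <= m)%N -> ((x%:R : 'Z_(m+1)) == 0) = (m + 1 %| x)%N.
Proof.
move=> hm; have hp : (1 < m+1)%N by lia.
have hv := val_Zp_nat hp x.
apply/idP/idP => [/eqP h | h].
  by rewrite /dvdn -hv h.
have e : nat_of_ord (x%:R : 'Z_(m+1)) = nat_of_ord (0 : 'Z_(m+1)) by rewrite hv; exact/eqP.
by rewrite (ord_inj e).
Qed.

Lemma Zeq m u v e : (2 <= m)%N -> (u < m + 1)%N -> (v < m + 1)%N ->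
  (u%:R : 'Z_(m+1)) = (-1) ^+ e * v%:R -> u = v \/ (u + v = m + 1)%N.
Proof.
move=> hm hu hv; rewrite -signr_odd; case: (odd e) => /= H.
  move: H; rewrite expr1 mulN1r => /eqP; rewrite -subr_eq0 opprK -natrD Z0 //.
  case/dvdnP => q hq.
  have : (q < 2)%N by nia.
  case: q hq => [|[|]] // hq _; lia.
left; move: H; rewrite expr0 mul1r => /(congr1 (@nat_of_ord _)); rewrite !val_Zp_nat ?modn_small //; lia.
Qed.

Lemma L2 m Y c e : (2 <= m)%N -> (1 <= c)%N ->
  (Y%:R : 'Z_(m+1)) = (-1) ^+ e * (c * Y)%:R ->
  (m + 1 %| (c - 1) * Y)%N \/ (m + 1 %| (c + 1) * Y)%N.
Proof.
move=> hm hc; rewrite -signr_odd; case: (odd e) => /= H.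
  right; rewrite -Z0 // mulnDl mul1n natrD H expr1 mulN1r subrr eqxx //.
left; rewrite -Z0 // mulnBl mul1n natrB; last by rewrite leq_pmull.
by rewrite H expr0 mul1r subrr.
Qed.

Lemma L3 m Y c : (2 <= m)%N -> (1 <= c)%N ->
  (m + 1 %| (c - 1) * Y)%N \/ (m + 1 %| (c + 1) * Y)%N ->
  exists e : nat, (Y%:R : 'Z_(m+1)) = (-1) ^+ e * (c * Y)%:R.
Proof.
move=> hm hc [] H.
  exists 0%N; move: H; rewrite -Z0 // mulnBl mul1n natrB; last by rewrite leq_pmull.
  by rewrite subr_eq0 expr0 mul1r => /eqP ->.
exists 1%N; move: H; rewrite -Z0 // mulnDl mul1n natrD expr1 mulN1r addr_eq0 => /eqP ->.
by rewrite opprK.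
Qed.

Lemma sign_cancel (R : comRingType) (a b : nat) (C D : R) :
  (-1) ^+ a * ((-1) ^+ b * (C * ((-1) ^+ a * D))) = (-1) ^+ b * (C * D).
Proof. by rewrite (mulrCA C) (mulrCA ((-1) ^+ a) ((-1) ^+ b)) signrMK. Qed.
End ZN.

Lemma dvd_part n y a : 0 < n -> n %| a * y -> (n %/ gcdn y n) %| a.
Proof.
move=> hn h.
have hG : 0 < gcdn y n by rewrite gcdn_gt0 hn orbT.
have h2 : n %| a * gcdn y n.
  by rewrite muln_gcdr dvdn_gcd h dvdn_mull.
rewrite -(dvdn_pmul2r hG) divnK //; exact: dvdn_gcdr.
Qed.

Lemma dvd_back n y a : (n %/ gcdn y n) %| a -> n %| a * y.
Proof.
move=> h.
have -> : a * y = (a * (y %/ gcdn y n)) * gcdn y n by rewrite -mulnA divnK // dvdn_gcdl.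
rewrite -[X in X %| _](divnK (dvdn_gcdr y n)).
apply: dvdn_mul => //; exact: dvdn_mulr.
Qed.

Lemma kap0 m j : iter j (kap m) 0 = 0.
Proof. elim: j => //= j ->; by rewrite /kap /kdesc /kasc div0n mod0n. Qed.

Lemma fwd (m t : nat) (hm : 2 <= m) (ht : 1 <= t) :
  (exists x, x < m ^ 2 /\ ~ (kfixed m x =i [:: 0]) /\ kperiod m x = t) ->
  (exists d, [/\ 1 < d, d %| m + 1,
     (d %| 2 ^ t + 1) || (d %| 2 ^ t - 1) &
     forall t', 0 < t' -> t' < t -> ~~ ((d %| 2 ^ t' + 1) || (d %| 2 ^ t' - 1))]).
Proof.
move=> [x [hx [hK hT]]].
have hT' := hT.
rewrite /kperiod in hT; case: pselect hT => [hex|_]; last lia.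
case: ex_minnP => p hp hmin hpt; subst p.
set z := iter (kstep m x) (kap m) x.
have hz : iter t (kap m) z = z.
  by move: hp; rewrite /is_per => /andP [_ /eqP]; rewrite addnC iterD.
have hminz : forall s, 0 < s -> iter s (kap m) z = z -> t <= s.
  move=> s hs hs'; apply: hmin; rewrite /is_per hs /= addnC iterD -/z hs'.
  exact: eqxx.
have z0 : z <> 0.
  move=> z0; apply: hK => a; rewrite /kfixed hT' inE.
  apply/mapP/eqP => [[i _ ->]|->].
    by rewrite addnC iterD -/z z0 kap0.
  exists 0; first by rewrite mem_iota; lia.
  by rewrite addn0 -/z z0.
have hw : iter (t - 1) (kap m) z < m ^ 2.
  by rewrite /z -iterD; apply: iter_lt2.
have [y [hy ez]] := kap_lt m _ hm hw.
have ez' : z = y * (m - 1).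
  by rewrite -ez -iterS; have -> : (t - 1).+1 = t by lia.
have y0 : y != 0 by apply/eqP => y0; apply: z0; rewrite ez' y0.
have hm1 : 0 < m - 1 by lia.
have hgy : iter t (g m) y = y.
  apply/eqP; rewrite -(eqn_pmul2r hm1) -iter_kap // -ez' hz //.
have hgmin : forall s, 0 < s -> iter s (g m) y = y -> t <= s.
  move=> s hs h; apply: hminz => //; by rewrite ez' iter_kap // h.
set n := m + 1.
have hn : 0 < n by rewrite /n; lia.
exists (n %/ gcdn y n).
have hG : 0 < gcdn y n by rewrite gcdn_gt0 hn orbT.
have hGy : gcdn y n <= y by apply: dvdn_leq; [lia | exact: dvdn_gcdl].
have en : n %/ gcdn y n * gcdn y n = n by apply: divnK; exact: dvdn_gcdr.
split.
- move: en hGy hG; rewrite /n; generalize (gcdn y (m + 1)) ((m + 1) %/ gcdn y (m + 1)) => G d.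
  case: d => [|[|d]] //=; lia.
- by rewrite -[X in _ %| X]en; apply: dvdn_mulr.
- have [e He] := iter_gZ m y t hm.
  rewrite hgy in He.
  have := L2 m y (2 ^ t) e hm _ He; rewrite expn_gt0 /= => /(_ isT) [] h.
    by apply/orP; right; apply: dvd_part.
  by apply/orP; left; apply: dvd_part.
- move=> t' ht' htt'; apply/negP => hd.
  have [e He] : exists e : nat, ((y%:R : 'Z_(m+1)) = (-1) ^+ e * (2 ^ t' * y)%N%:R)%R.
    apply: (L3 m y (2 ^ t') hm); first by rewrite expn_gt0.
    by case/orP: hd => h; [right | left]; apply: dvd_back.
  have [e1 He1] := iter_gZ m y t' hm.
  have hu : iter t' (g m) y < m by apply: iter_g_lt.
  have := Zeq m _ _ _ hm _ _ (@sign_comb _ _ _ _ _ _ He1 He).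
  case => [||hu'|hsum]; [lia | lia | have := hgmin t' ht' hu'; lia | ].
  have hgu : g m (iter t' (g m) y) = g m y.
    have -> : iter t' (g m) y = m + 1 - y by lia.
    apply: g_sym; lia.
  have : iter t' (g m) y = y.
    rewrite -{1}hgy -iterD.
    have -> : t' + t = (t - 1) + t'.+1 by lia.
    rewrite iterD iterS hgu -iterSr.
    by have -> : (t - 1).+1 = t by lia.
  move/(hgmin t' ht'); lia.
Qed.

Lemma bwd (m t : nat) (hm : 2 <= m) (ht : 1 <= t) :
  (exists d, [/\ 1 < d, d %| m + 1,
     (d %| 2 ^ t + 1) || (d %| 2 ^ t - 1) &
     forall t', 0 < t' -> t' < t -> ~~ ((d %| 2 ^ t' + 1) || (d %| 2 ^ t' - 1))]) ->
  (exists x, x < m ^ 2 /\ ~ (kfixed m x =i [:: 0]) /\ kperiod m x = t).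
Proof.
move=> [d [hd1 hdn hP hmin]].
have h2t : 0 < 2 ^ t by rewrite expn_gt0.
have dodd : odd d.
  have o2 : odd (2 ^ t) = false by rewrite oddX /=; lia.
  case/orP: hP => h; apply: (dvdn_odd h).
    by rewrite oddD o2.
  by rewrite oddB // o2.
set k := (m + 1) %/ d.
have ek : k * d = m + 1 by apply: divnK.
have hk0 : 0 < k by case: k ek => //= ; lia.
have hkm : k < m by nia.
have Dk : forall a, d %| a -> m + 1 %| a * k.
  by move=> a ha; rewrite -ek mulnC; apply: dvdn_mul.
have D2k : forall a, m + 1 %| a * (2 * k) -> d %| a.
  move=> a; rewrite -ek (mulnC k d) mulnA dvdn_pmul2r // => h.
  by rewrite -(@Gauss_dvdl d a 2) // coprimen2.
have hm1 : 0 < m - 1 by lia.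
set y := g m k.
have hy : y < m by apply: g_lt.
have [e0 He0] : exists e : nat, ((k%:R : 'Z_(m+1)) = (-1) ^+ e * (2 ^ t * k)%N%:R)%R.
  apply: (L3 m k (2 ^ t) hm) => //.
  by case/orP: hP => h; [right | left]; apply: Dk.
have [e1 He1] := iter_gZ m k t hm.
have hcyc : iter t (g m) y = y.
  rewrite /y -iterSr iterS.
  have hu : iter t (g m) k < m by apply: iter_g_lt.
  have := Zeq m _ _ _ hm _ _ (@sign_comb _ _ _ _ _ _ He1 He0).
  case => [||->|hsum] //; try lia.
  have -> : iter t (g m) k = m + 1 - k by lia.
  apply: g_sym; lia.
have [a Ha] := gZ m k hm.
have y0 : y != 0.
  apply/eqP => y0; move: Ha; rewrite -/y y0 => /(congr1 (GRing.mul ((-1) ^+ a)%R)).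
  rewrite signrMK GRing.mulr0 => /esym/eqP.
  rewrite Z0 // -(mul1n (2 * k)) => /D2k; rewrite dvdn1 => /eqP d1; lia.
have hminy : forall s, 0 < s -> iter s (g m) y = y -> t <= s.
  move=> s hs hsy.
  have [b Hb] := iter_gZ m y s hm.
  rewrite hsy natrM Ha in Hb.
  have Hb' : ((2 * k)%N%:R : 'Z_(m+1))%R = ((-1) ^+ b * (2 ^ s * (2 * k))%N%:R)%R.
    move: Hb => /(congr1 (GRing.mul ((-1) ^+ a)%R)); rewrite signrMK => ->.
    by rewrite sign_cancel !natrM.
  have := L2 m (2 * k) (2 ^ s) b hm _ Hb'; rewrite expn_gt0 /= => /(_ isT) h.
  rewrite leqNgt; apply/negP => hst; move: (hmin s hs hst); apply/negP/negPn.
  by case: h => /D2k h; apply/orP; [right | left].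
set x := y * (m - 1).
have hx : x < m ^ 2 by rewrite /x expnS expn1; apply: ltn_mul => //; lia.
have hxc : iter t (kap m) x = x by rewrite /x iter_kap // hcyc.
have hks : kstep m x = 0.
  rewrite /kstep; case: pselect => [h|nh].
    case: ex_minnP => s _ hs; apply/eqP; rewrite -leqn0; apply: hs.
    by apply/asboolP; exists t; split; [lia | rewrite add0n hxc].
  exfalso; apply: nh; exists 0; apply/asboolP; exists t; split; [lia | by rewrite add0n hxc].
have hper : forall s, is_per m x s = (0 < s) && (iter s (kap m) x == x).
  by move=> s; rewrite /is_per hks add0n.
have hkp : kperiod m x = t.
  rewrite /kperiod; case: pselect => [h|nh].
    case: ex_minnP => p; rewrite hper => /andP [hp0 /eqP hp] hmp.
    apply/eqP; rewrite eqn_leq; apply/andP; split.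
      by apply: hmp; rewrite hper hxc eqxx andbT; lia.
    apply: hminy => //; apply/eqP; rewrite -(eqn_pmul2r hm1) -iter_kap // -/x hp.
    exact: eqxx.
  exfalso; apply: nh; exists t; rewrite hper hxc eqxx andbT; lia.
exists x; split => //; split => //.
move=> H; have : x \in kfixed m x.
  rewrite /kfixed hks hkp; apply/mapP; exists 0; first by rewrite mem_iota; lia.
  by rewrite addn0.
rewrite H inE /x muln_eq0 => /orP []; [exact/negP | lia].
Qed.

Theorem theorem3p3p3 (m t : nat) (hm : 2 <= m) (ht : 1 <= t) :
  (exists x, x < m ^ 2 /\ ~ (kfixed m x =i [:: 0]) /\ kperiod m x = t) <->
  (exists d, [/\ 1 < d, d %| m + 1,
     (d %| 2 ^ t + 1) || (d %| 2 ^ t - 1) &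
     forall t', 0 < t' -> t' < t -> ~~ ((d %| 2 ^ t' + 1) || (d %| 2 ^ t' - 1))]).
Proof. split; [exact: fwd | exact: bwd]. Qed.
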